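(* Let $n,k,d$ be positive integers with $k\le d<n$, and let $n_1,\dots,n_l$ be positive integers with $n=n_1+\dots+n_l$ and $n_j\ge n-k+1$ for all $j=1,\dots,l$. Define $k_j=n_j-n+k$ and $d_j=n_j-n+d$ for $j=1,\dots,l$. Then for all $\alpha,\gamma>0$, $$C^{\mathrm{exact}}_{n,k,d}(\alpha,\gamma)\ \ge\ \sum_{j=1}^{l}C^{\mathrm{exact}}_{n_j,k_j,d_j}(\alpha,\gamma).$$
   Context: A distributed storage system (DSS) with parameters $(n,k,d)$ stores a file across $n$ nodes, each storing an amount $\alpha$ of information (e.g. $\alpha$ symbols over a finite field, where symbols may be split into arbitrarily many sub-symbols), such that the file can be reconstructed from the contents of any $k$ nodes, and any lost node can be repaired by contacting any $d$ of the remaining nodes, each of which transmits an amount $\beta$ to the replacement node, for a total repair bandwidth $\gamma=d\beta$. Repair is exact: the replacement node stores exactly the same content as the lost node. $C^{\mathrm{exact}}_{n,k,d}(\alpha,\gamma)$ denotes the maximum size of a file that can be stored by such an exact-repair DSS with $n$ nodes, node size $\alpha$ and total repair bandwidth $\gamma$. *)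

(* Defs.v *)
From HB Require Import structures.
From mathcomp Require Import all_boot all_order all_algebra.
From mathcomp Require Import all_classical all_reals all_analysis.
Set Implicit Arguments. Unset Strict Implicit. Unset Printing Implicit Defensive.
Import Order.TTheory GRing.Theory Num.Theory.
Local Open Scope classical_set_scope.
Local Open Scope ring_scope.

(* An exact-repair DSS code with n nodes (indexed by 'I_n), reconstruction
   degree k and repair degree d.
   - M        : finite set of files (messages);
   - f i m    : content (element of an alphabet of size a) stored at node i
                when the file is m;
   - phi i D h s : what helper h in D sends (element of an alphabet of size
                b) when node i is repaired from helper set D, as a function of
                the content s stored at h.
   Exact repair: for any node i and any d-subset D of the other nodes, the
   messages sent by the helpers in D determine the content of node i.
   ("determine" = existence of a decoding function, stated as injectivity.) *)
Definition is_exact_DSS (n k d : nat) (M : finType) (a b : nat)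
  (f : 'I_n -> M -> 'I_a) (phi : 'I_n -> {set 'I_n} -> 'I_n -> 'I_a -> 'I_b)
  : Prop :=
  (forall K : {set 'I_n}, #|K| = k ->
     forall m m' : M, (forall h, h \in K -> f h m = f h m') -> m = m') /\
  (forall (i : 'I_n) (D : {set 'I_n}), i \notin D -> #|D| = d ->
     forall m m' : M,
       (forall h, h \in D -> phi i D h (f h m) = phi i D h (f h m')) ->
       f i m = f i m').

(* Achievable (normalised) file sizes with node size alpha and total repair
   bandwidth gamma (so per-helper bandwidth beta = gamma / d).  Information is
   measured as ln(alphabet size) / l for a free scale l > 0 (choice of unit /
   sub-packetization level): node storage <= alpha, helper transmission
   <= beta, file size = ln #|M| / l. *)
Definition dss_file_sizes {R : realType} (n k d : nat) (alpha gamma : R)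
  : set R :=
  [set x | exists (l : R) (M : finType) (a b : nat)
             (f : 'I_n -> M -> 'I_a)
             (phi : 'I_n -> {set 'I_n} -> 'I_n -> 'I_a -> 'I_b),
     [/\ 0 < l, (0 < #|M|)%N,
         ln (a%:R : R) <= alpha * l /\
         ln (b%:R : R) <= gamma / d%:R * l,
         is_exact_DSS k d f phi
       & x = ln (#|M|%:R : R) / l]].

Definition C_exact {R : realType} (n k d : nat) (alpha gamma : R) : R :=
  sup (dss_file_sizes n k d alpha gamma).

(* Main.v *)
Require Import Defs.
From HB Require Import structures.
From mathcomp Require Import all_boot all_order all_algebra all_fingroup.
From mathcomp Require Import all_classical all_reals all_analysis.
From mathcomp Require Import ring lra zify.
Set Implicit Arguments. Unset Strict Implicit. Unset Printing Implicit Defensive.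
Import Order.TTheory GRing.Theory Num.Theory.
Local Open Scope ring_scope.

Lemma widen_inj m n (h : (m <= n)%N) : injective (widen_ord h).
Proof. by move=> x y /(congr1 val) /= /val_inj. Qed.

Record code (R : realType) (n k d : nat) (alpha gamma : R) := Code {
  cl : R; cM : finType; ca : nat; cb : nat;
  cf : 'I_n -> cM -> 'I_ca;
  cphi : 'I_n -> {set 'I_n} -> 'I_n -> 'I_ca -> 'I_cb;
  cl_gt0 : 0 < cl; cM_gt0 : (0 < #|cM|)%N;
  ca_le : ln (ca%:R : R) <= alpha * cl;
  cb_le : ln (cb%:R : R) <= gamma / d%:R * cl;
  cvalid : is_exact_DSS k d cf cphi }.

Definition crate (R : realType) n k d alpha gamma (c : @code R n k d alpha gamma) : R :=
  ln (#|cM c|%:R : R) / cl c.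

Lemma code_mem (R : realType) n k d (alpha gamma : R) (c : code n k d alpha gamma) :
  dss_file_sizes n k d alpha gamma (crate c).
Proof.
case: c => l M a b f phi *; exists l, M, a, b, f, phi; split => //.
Qed.

Lemma mem_code (R : realType) n k d (alpha gamma : R) x :
  dss_file_sizes n k d alpha gamma x -> exists c : code n k d alpha gamma, x = crate c.
Proof.
move=> [l [M [a [b [f [phi [hl hM [ha hb] hv ->]]]]]]].
by exists (Code hl hM ha hb hv).
Qed.

Lemma crate_ge0 (R : realType) n k d (alpha gamma : R) (c : code n k d alpha gamma) : 0 <= crate c.
Proof.
rewrite /crate divr_ge0 //; last exact/ltW/cl_gt0.
by apply: ln_ge0; rewrite ler1n; exact: cM_gt0.
Qed.

Lemma dss_nonempty (R : realType) n k d (alpha gamma : R) :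
  0 <= alpha -> 0 <= gamma -> dss_file_sizes n k d alpha gamma 0.
Proof.
move=> ha hg.
pose f := fun (_ : 'I_n) (_ : unit) => (ord0 : 'I_1).
pose phi := fun (_ : 'I_n) (_ : {set 'I_n}) (_ : 'I_n) (_ : 'I_1) => (ord0 : 'I_1).
exists 1, unit, 1%N, 1%N, f, phi; split.
- exact: ltr01.
- by rewrite card_unit.
- by rewrite !ln1 !mulr1 divr_ge0.
- split; [by move=> K _ [] [] | by []].
- by rewrite card_unit ln1 mul0r.
Qed.



Lemma dss_ub (R : realType) n k d (alpha gamma : R) :
  0 <= alpha -> (k <= n)%N -> ubound (dss_file_sizes n k d alpha gamma) (k%:R * alpha).
Proof.
move=> ha hkn z [l [M [a [b [f [phi [hl hM [hla hlb] [hrec _] ->]]]]]]].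
pose K := [set widen_ord hkn y | y : 'I_k].
have cK : #|K| = k by rewrite card_imset ?card_ord //; exact: widen_inj.
pose g := fun m : M => [ffun y : 'I_k => f (widen_ord hkn y) m].
have ginj : injective g.
  move=> m m' /ffunP e; apply: (hrec K cK) => h /imsetP [x _ ->].
  by have := e x; rewrite !ffunE.
have cM : (#|M| <= a ^ k)%N.
  by have := leq_card _ ginj; rewrite card_ffun !card_ord.
have hM' : (0 < a ^ k)%N := leq_trans hM cM.
have lnM : ln (#|M|%:R : R) <= ln ((a ^ k)%N%:R).
  by rewrite ler_ln ?ler_nat // posrE ltr0n.
rewrite ler_pdivrMr //.
apply: (le_trans lnM).
move: hM'; rewrite expn_gt0 => /orP [ha0|/eqP k0].
  rewrite natrX lnXn ?ltr0n //.
  by rewrite -[ln _ *+ _]mulr_natl -mulrA ler_wpM2l.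
by rewrite k0 expn0 ln1 mul0r mul0r.
Qed.

Lemma dss_has_sup (R : realType) n k d (alpha gamma : R) :
  0 <= alpha -> 0 <= gamma -> (k <= n)%N -> has_sup (dss_file_sizes n k d alpha gamma).
Proof.
move=> ha hg hkn; split; first by exists 0; exact: dss_nonempty.
by exists (k%:R * alpha); exact: dss_ub.
Qed.

Lemma approx (R : realType) (L n : nat) (nj : 'I_L -> nat) (l X : 'I_L -> R) (dl : R) :
  n = (\sum_j nj j)%N -> (0 < n)%N -> (forall j, 0 < l j) -> (forall j, 0 <= X j) -> 0 < dl ->
  exists r : 'I_L -> nat, (forall j, 0 < r j)%N /\
    \sum_j X j <= n%:R * (\sum_j (r j)%:R * (X j * l j)) / (\sum_j (r j)%:R * (nj j)%:R * l j) + dl.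
Proof.
move=> hn n0 hl hX hdl.
set Xs := \sum_j X j; set S := \sum_j (nj j)%:R * l j.
have Xs0 : 0 <= Xs by apply: sumr_ge0 => j _; exact: hX.
have S0 : 0 <= S by apply: sumr_ge0 => j _; rewrite mulr_ge0 // ltW.
have nR0 : 0 < (n%:R : R) by rewrite ltr0n.
set T := Xs * S / (dl * n%:R) + 1.
have T0 : 0 < T by rewrite /T ltr_pwDr // divr_ge0 ?mulr_ge0 // ltW // mulr_gt0.
pose r j := (Num.truncn (T / l j)).+1.
have hr1 j : T <= (r j)%:R * l j.
  rewrite -ler_pdivrMr // ltW //; exact: truncnS_gt.
have hr2 j : (r j)%:R * l j <= T + l j.
  rewrite /r -natr1 mulrDl mul1r lerD2r -ler_pdivlMr //.
  by rewrite truncn_le divr_ge0 // ltW.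
exists r; split => [j|]; first by [].
set N := \sum_j _; set D := \sum_j _.
have hN : T * Xs <= N.
  rewrite /Xs mulr_sumr /N; apply: ler_sum => j _.
  by rewrite mulrCA [T * _]mulrC ler_wpM2l.
have hD : D <= n%:R * T + S.
  rewrite /D /S hn natr_sum mulr_suml -big_split /=; apply: ler_sum => j _.
  by rewrite -mulrDr -mulrA mulrCA ler_wpM2l // mulrC.
have hD0 : n%:R * T <= D.
  rewrite /D hn natr_sum mulr_suml; apply: ler_sum => j _.
  by rewrite -mulrA mulrCA ler_wpM2l // mulrC.
have D0 : 0 < D by apply: lt_le_trans hD0; rewrite mulr_gt0.
have key : Xs * S <= dl * (n%:R * T).
  have -> : dl * (n%:R * T) = Xs * S + dl * n%:R.
    by rewrite /T; field; rewrite !gt_eqF.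
  by rewrite lerDl mulr_ge0 // ltW.
rewrite -lerBlDr.
have dS : 0 <= dl * S by rewrite mulr_ge0 // ltW.
have nT0 : 0 < n%:R * T by rewrite mulr_gt0.
apply: (@le_trans _ _ (n%:R * T * Xs / (n%:R * T + S))).
  rewrite ler_pdivlMr ?ltr_wpDr //.
  have -> : (Xs - dl) * (n%:R * T + S) = n%:R * T * Xs + (Xs * S - dl * (n%:R * T)) - dl * S by ring.
  move: key dS; set u := Xs * S; set v := dl * _; set w := dl * S; move=> *; lra.
apply: (@le_trans _ _ (n%:R * N / (n%:R * T + S))).
  by rewrite ler_pM2r ?invr_gt0 ?ltr_wpDr // -mulrA ler_pM2l.
have N0 : 0 <= N by apply: le_trans hN; rewrite mulr_ge0 // ltW.
rewrite ler_wpM2l ?mulr_ge0 //.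
by rewrite lef_pV2 ?posrE ?ltr_wpDr.
Qed.


Local Open Scope nat_scope.

Definition ch (m p : nat) (X : {set 'I_m}) : {set 'I_m} :=
  odflt X [pick S : {set 'I_m} | (S \subset X) && (#|S| == p)].

Lemma ch_spec m p (X : {set 'I_m}) : (p <= #|X|)%N -> ch p X \subset X /\ #|ch p X| = p.
Proof.
move=> hp; rewrite /ch; case: pickP => [S /andP [h1 /eqP h2] //|none].
pose S := [set x in take p (enum X)].
suff H : (S \subset X) && (#|S| == p) by rewrite none in H.
apply/andP; split.
  by apply/fintype.subsetP => x; rewrite inE => /mem_take; rewrite mem_enum.
rewrite cardsE; apply/eqP; move: (enum_uniq (mem X)) => u.
have /card_uniqP -> : uniq (take p (enum X)) by rewrite take_uniq.
by rewrite size_takel // -cardE.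
Qed.

Section PermCount.
Variables (n m : nat) (hm : (m <= n)%N).

Definition emb (s : {perm 'I_n}) (u : 'I_m) : 'I_n := s (widen_ord hm u).

Lemma emb_inj s : injective (emb s).
Proof. by move=> x y /perm_inj /widen_inj. Qed.

Definition loc s (i : 'I_n) : option 'I_m := [pick u | emb s u == i].

Lemma locP s i u : (loc s i = Some u) <-> (emb s u = i).
Proof.
rewrite /loc; case: pickP => [v /eqP hv|none]; split.
- by move=> [<-].
- by move=> hu; congr Some; apply: (@emb_inj s); rewrite hv hu.
- by [].
- by move=> hu; have := none u; rewrite hu eqxx.
Qed.

Lemma loc_emb s u : loc s (emb s u) = Some u.
Proof. exact/locP. Qed.

Definition ini s i : bool := isSome (loc s i).

Lemma iniP s i : reflect (exists u, emb s u = i) (ini s i).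
Proof.
rewrite /ini; case h : (loc s i) => [u|] /=; constructor.
  by exists u; apply/locP.
by move=> [u /locP]; rewrite h.
Qed.

Lemma emb_tperm s a b u : emb (s * tperm a b)%g u = tperm a b (emb s u).
Proof. by rewrite /emb permM. Qed.

Definition Nc i := #|[set s : {perm 'I_n} | ini s i]|.

Lemma Nc_const i i' : Nc i = Nc i'.
Proof.
rewrite /Nc -(card_imset _ (mulIg (tperm i i'))); apply: eq_card => s.
rewrite inE; apply/imsetP/idP => [[t]|].
  rewrite inE => /iniP [u hu] ->; apply/iniP; exists u.
  by rewrite emb_tperm hu tpermL.
move=> /iniP [u hu]; exists (s * tperm i i')%g; last by rewrite -mulgA tperm2 mulg1.
rewrite inE; apply/iniP; exists u; by rewrite emb_tperm hu tpermR.
Qed.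

Lemma Nc_sum i : (n * Nc i = m * #|{perm 'I_n}|)%N.
Proof.
have -> : (n * Nc i = \sum_(i' : 'I_n) Nc i')%N.
  by rewrite (eq_bigr (fun _ => Nc i)) ?sum_nat_const ?card_ord // => i' _; apply: Nc_const.
rewrite /Nc.
under eq_bigr do rewrite -sum1dep_card.
under eq_bigr do rewrite big_mkcond.
rewrite exchange_big /= (eq_bigr (fun _ => m)); first by rewrite sum_nat_const mulnC.
move=> s _.
rewrite -big_mkcond sum1dep_card -[in RHS](card_ord m) -(card_imset _ (@emb_inj s)).
apply: eq_card => i'; rewrite inE; apply/iniP/imsetP => [[u <-]|[u _ ->]]; by exists u.
Qed.

Lemma card_mul_perm (t : {perm 'I_n}) (P Q : pred {perm 'I_n}) :
  (forall s, Q (s * t)%g = P s) -> #|[set s | P s]| = #|[set s | Q s]|.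
Proof.
move=> hPQ; rewrite -(card_imset _ (mulIg t)); apply: eq_card => s.
rewrite inE; apply/imsetP/idP => [[u]|hs].
  by rewrite inE => hu ->; rewrite hPQ.
exists (s * t^-1)%g; last by rewrite -mulgA mulVg mulg1.
by rewrite inE -hPQ -mulgA mulVg mulg1.
Qed.

Lemma ch_sub p' (X : {set 'I_m}) : ch p' X \subset X.
Proof. by rewrite /ch; case: pickP => [S /andP [] //|]. Qed.

Variable p : nat.

Definition LD s (D : {set 'I_n}) : {set 'I_m} := [set u | emb s u \in D].

Lemma card_LD s (D : {set 'I_n}) : (#|D| + m <= #|LD s D| + n)%N.
Proof.
have -> : #|LD s D| = #|D :&: (emb s @: [set: 'I_m])|.
  rewrite -(card_imset _ (@emb_inj s)); apply: eq_card => x.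
  rewrite inE; apply/imsetP/andP => [[u]|[xD /imsetP [u _ hx]]].
    by rewrite inE => uD ->; split => //; apply/imsetP; exists u.
  by exists u => //; rewrite inE -hx.
have e : #|emb s @: [set: 'I_m]| = m by rewrite card_imset ?cardsT ?card_ord //; exact: emb_inj.
have := cardsUI D (emb s @: [set: 'I_m]); have := subset_leq_card (finset.subsetT (D :|: emb s @: [set: 'I_m])).
rewrite cardsT card_ord e; lia.
Qed.

Definition SD s D := ch p (LD s D).
Definition sel s D h : bool := if loc s h is Some v then v \in SD s D else false.
Definition Kc i D h := #|[set s | ini s i && sel s D h]|.

Lemma selP s (D : {set 'I_n}) h : reflect (exists2 v, v \in SD s D & emb s v = h) (sel s D h).
Proof.
rewrite /sel; case h1 : (loc s h) => [u|]; apply: (iffP idP).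
- by move=> hu; exists u => //; apply/locP.
- by move=> [v hv /locP]; rewrite h1 => -[->].
- by [].
- by move=> [v _ /locP]; rewrite h1.
Qed.

Lemma sel_inD s (D : {set 'I_n}) h : sel s D h -> h \in D.
Proof.
move/selP => [v /(fintype.subsetP (ch_sub _ _))]; rewrite inE => hv <-; exact: hv.
Qed.

Lemma tperm_mem (D : {set 'I_n}) a b x : a \in D -> b \in D -> (tperm a b x \in D) = (x \in D).
Proof. by move=> ha hb; case: tpermP => [->|->|]; rewrite ?ha ?hb. Qed.

Lemma Kc_const i (D : {set 'I_n}) h h' : i \notin D -> h \in D -> h' \in D -> Kc i D h = Kc i D h'.
Proof.
move=> iD hD h'D; rewrite /Kc.
apply: (card_mul_perm (t := tperm h h') (P := fun s => ini s i && sel s D h)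
  (Q := fun s => ini s i && sel s D h')) => s /=.
have hi : tperm h h' i = i.
  by apply: tpermD; apply: contraNneq iD => <-.
have eLD : LD (s * tperm h h')%g D = LD s D.
  by apply/setP => u; rewrite !inE emb_tperm tperm_mem.
congr andb.
  apply/iniP/iniP => [[u]|[u hu]].
    by move=> hu; exists u; apply: (@perm_inj _ (tperm h h')); rewrite -emb_tperm hu hi.
  by exists u; rewrite emb_tperm hu.
apply/selP/selP => [[v]|[v hv hv']].
  rewrite /SD eLD emb_tperm => hv /(congr1 (tperm h h')); rewrite tpermK tpermR => e.
  by exists v.
exists v; first by rewrite /SD eLD.
by rewrite emb_tperm hv' tpermL.
Qed.

Lemma Kc_sum i (D : {set 'I_n}) : (p + n <= #|D| + m)%N -> (\sum_(h in D) Kc i D h = p * Nc i)%N.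
Proof.
move=> hp; rewrite /Kc /Nc.
under eq_bigr do rewrite -sum1dep_card big_mkcond.
rewrite exchange_big /= -sum1dep_card big_distrr /= [RHS]big_mkcond /=.
apply: eq_bigr => s _; rewrite muln1.
case: (ini s i) => /=; last by rewrite big1.
rewrite -big_mkcondr sum1dep_card /=.
have [hsub hcard] := ch_spec (X := LD s D) (p := p) (ltac:(have := card_LD s D; lia)).
rewrite -[in RHS]hcard -(card_imset _ (@emb_inj s)); apply: eq_card => h.
rewrite inE; apply/andP/imsetP => [[_ /selP [v hv <-]]|[v hv ->]].
  by exists v.
have hs : sel s D (emb s v) by apply/selP; exists v.
by split => //; exact: sel_inD hs.
Qed.

Lemma Kc_val i (D : {set 'I_n}) h : i \notin D -> h \in D -> (p + n <= #|D| + m)%N ->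
  (#|D| * Kc i D h = p * Nc i)%N.
Proof.
move=> iD hD hp; rewrite -(Kc_sum i hp) -sum_nat_const; apply: eq_bigr => h' h'D.
exact: Kc_const.
Qed.

End PermCount.

Local Open Scope ring_scope.

Definition encS (T : finType) (S : {pred T}) (N : nat) (x : T) : 'I_N.+1 :=
  inord (index x (enum S)).
Definition decS (T : finType) (S : {pred T}) (x0 : T) (N : nat) (y : 'I_N.+1) : T :=
  nth x0 (enum S) y.

Lemma encSK (T : finType) (S : {pred T}) (x0 : T) N x :
  x \in S -> (#|S| <= N.+1)%N -> decS S x0 (encS S N x) = x.
Proof.
move=> xS hS; rewrite /decS /encS.
have hi : (index x (enum S) < N.+1)%N.
  by apply: leq_trans hS; rewrite cardE index_mem mem_enum.
by rewrite (inordK hi) nth_index // mem_enum.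
Qed.

Lemma inord_inj N a b : (a <= N)%N -> (b <= N)%N -> inord a = inord b :> 'I_N.+1 -> a = b.
Proof. by move=> ha hb /(congr1 (@nat_of_ord _)); rewrite !inordK. Qed.

Lemma ln_prod (R : realType) (T : finType) (F : T -> nat) :
  (forall x, 0 < F x)%N -> ln ((\prod_x F x)%:R : R) = \sum_x ln ((F x)%:R).
Proof.
move=> hF; rewrite natr_prod.
suff [h _] : \sum_x ln ((F x)%:R : R) = ln (\prod_x (F x)%:R) /\ 0 < \prod_x ((F x)%:R : R).
  by rewrite h.
elim/big_rec2: _ => [|x a b _ [-> hb]]; first by rewrite ln1 ltr01.
by split; [rewrite lnM ?posrE ?ltr0n | rewrite mulr_gt0 ?ltr0n].
Qed.

Lemma card_lt_ord N b : (b <= N)%N -> #|[pred y : 'I_N | (y < b)%N]| = b.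
Proof.
move=> hb; rewrite -[RHS](card_ord b) -(card_imset _ (@widen_inj _ _ hb)).
apply: eq_card => y; rewrite inE; apply/idP/imsetP => [hy|[z _ ->]] /=.
  by exists (Ordinal hy) => //; apply: val_inj.
exact: ltn_ord.
Qed.

Section Big.
Variables (R : realType) (n k d L : nat) (nj r : 'I_L -> nat) (alpha gamma : R).
Hypotheses (hnj : forall j, (nj j <= n)%N) (hpos : forall j, (0 < nj j)%N)
  (hdj : forall j, (0 < nj j + d - n)%N) (hr : forall j, (0 < r j)%N) (hn : (0 < n)%N)
  (ha : 0 <= alpha) (hg : 0 <= gamma) (hL : (0 < L)%N).
Variable c : forall j, code (nj j) (nj j + k - n) (nj j + d - n) alpha gamma.

Local Notation aj j := (ca (c j)).
Local Notation bj j := (cb (c j)).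
Local Notation pj j := (nj j + d - n)%N.
Local Notation qj j := (nj j + k - n)%N.

Definition Cp := {j : 'I_L & ('I_(r j) * {perm 'I_n})%type}.
Definition sg (x : Cp) : {perm 'I_n} := (tagged x).2.
Definition locx (x : Cp) (i : 'I_n) : option 'I_(nj (tag x)) := loc (hnj (tag x)) (sg x) i.
Definition Mbig := {dffun forall x : Cp, cM (c (tag x))}.
Definition Amax := (\max_j aj j)%N.
Definition Bmax := (\max_j bj j)%N.

Definition stv (i : 'I_n) (m : Mbig) : {ffun Cp -> 'I_Amax.+1} :=
  [ffun x => inord (if locx x i is Some u then val (@cf _ _ _ _ _ _ (c (tag x)) u (m x)) else 0%N)].
Definition bnd i (x : Cp) : nat := if locx x i is Some _ then aj (tag x) else 1%N.
Definition Sfam i : pred {ffun Cp -> 'I_Amax.+1} :=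
  family (fun x => [pred y : 'I_Amax.+1 | (y < bnd i x)%N]).
Definition aBig := (\max_(i : 'I_n) #|Sfam i|)%N.
Definition fbig i (m : Mbig) : 'I_aBig.-1.+1 := encS (Sfam i) aBig.-1 (stv i m).

Definition vld i (D : {set 'I_n}) h := [&& i \notin D, #|D| == d & h \in D].
Definition SDx (x : Cp) D := SD (hnj (tag x)) (pj (tag x)) (sg x) D.
Definition selx (x : Cp) D h := sel (hnj (tag x)) (pj (tag x)) (sg x) D h.
Definition inix (x : Cp) i := ini (hnj (tag x)) (sg x) i.

Definition msg (x : Cp) i D h (y : {ffun Cp -> 'I_Amax.+1}) : nat :=
  match locx x i, locx x h, [pick z : 'I_(aj (tag x))] with
  | Some u, Some v, Some z0 =>
      if v \in SDx x D then val (@cphi _ _ _ _ _ _ (c (tag x)) u (SDx x D) v (insubd z0 (val (y x)))) else 0%N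
  | _, _, _ => 0%N end.

Definition wv i D h y : {ffun Cp -> 'I_Bmax.+1} :=
  [ffun x => inord (if vld i D h then msg x i D h y else 0%N)].
Definition bndw i D h (x : Cp) : nat :=
  if [&& vld i D h, inix x i & selx x D h] then bj (tag x) else 1%N.
Definition Rfam i D h : pred {ffun Cp -> 'I_Bmax.+1} :=
  family (fun x => [pred z : 'I_Bmax.+1 | (z < bndw i D h x)%N]).
Definition bBig := (\max_(t : 'I_n * {set 'I_n} * 'I_n) #|Rfam t.1.1 t.1.2 t.2|)%N.
Definition phibig i D h (z : 'I_aBig.-1.+1) : 'I_bBig.-1.+1 :=
  encS (Rfam i D h) bBig.-1 (wv i D h (decS (Sfam h) [ffun _ => ord0] z)).


Lemma aj_le j : (aj j <= Amax)%N.
Proof. by rewrite /Amax; apply: leq_bigmax. Qed.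
Lemma bj_le j : (bj j <= Bmax)%N.
Proof. by rewrite /Bmax; apply: leq_bigmax. Qed.

Lemma aj_gt0 j : (0 < aj j)%N.
Proof.
have /card_gt0P [m0 _] := cM_gt0 (c j).
by have := ltn_ord (cf (Ordinal (hpos j)) m0); apply: leq_trans.
Qed.

Lemma bj_gt0 j : (0 < bj j)%N.
Proof.
have /card_gt0P [m0 _] := cM_gt0 (c j).
pose u := Ordinal (hpos j).
by have := ltn_ord (cphi u (finset.set0 : {set 'I_(nj j)}) u (cf u m0)); apply: leq_trans.
Qed.

Lemma stv_in i m : stv i m \in Sfam i.
Proof.
apply/familyP => x; rewrite ffunE inE /bnd; case: (locx x i) => [u|] /=.
  rewrite inordK //; apply: leq_trans (ltn_ord _) _; exact: leq_trans (aj_le _) (leqnSn _).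
by rewrite inordK.
Qed.

Lemma Mbig_card : #|Mbig| = (\prod_(x : Cp) #|cM (c (tag x))|)%N.
Proof. by rewrite card_dep_ffun foldrE big_map big_enum. Qed.

Lemma Mbig_gt0 : (0 < #|Mbig|)%N.
Proof. by rewrite Mbig_card prodn_gt0 // => x; exact: cM_gt0. Qed.

Lemma Sfam_gt0 i : (0 < #|Sfam i|)%N.
Proof. have /card_gt0P [m0 _] := Mbig_gt0; apply/card_gt0P; exists (stv i m0); exact: stv_in. Qed.

Lemma Sfam_le i : (#|Sfam i| <= aBig)%N.
Proof. by rewrite /aBig; apply: (leq_bigmax i). Qed.

Lemma aBig_gt0 : (0 < aBig)%N.
Proof. exact: leq_trans (Sfam_gt0 (Ordinal hn)) (Sfam_le _). Qed.

Lemma fbigK i m : decS (Sfam i) [ffun _ => ord0] (fbig i m) = stv i m.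
Proof. by rewrite encSK ?stv_in // prednK ?Sfam_le // aBig_gt0. Qed.

Lemma wv_in i D h y : wv i D h y \in Rfam i D h.
Proof.
apply/familyP => x; rewrite ffunE inE /bndw.
have hb : (bj (tag x) <= Bmax.+1)%N := leq_trans (bj_le _) (leqnSn _).
case: (vld i D h) => /=; last first.
  by rewrite inordK //; case: ifP => _ //; exact: bj_gt0.
rewrite /msg /inix /selx /ini /sel -/(locx x i) -/(locx x h) -/(SDx x D).
case: (locx x i) => [u|] /=; last by rewrite inordK.
case: (locx x h) => [v|] /=; last by rewrite inordK.
case: pickP => [z0 _|_].
  case: ifP => _; last by rewrite inordK.
  by rewrite inordK //; apply: leq_trans (ltn_ord _) _.
by rewrite inordK //; case: ifP => _ //; exact: bj_gt0.
Qed.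

Lemma Rfam_gt0 i D h : (0 < #|Rfam i D h|)%N.
Proof. apply/card_gt0P; exists (wv i D h [ffun _ => ord0]); exact: wv_in. Qed.

Lemma Rfam_le i D h : (#|Rfam i D h| <= bBig)%N.
Proof. by rewrite /bBig; apply: (leq_bigmax (i, D, h)). Qed.

Lemma bBig_gt0 : (0 < bBig)%N.
Proof. exact: leq_trans (Rfam_gt0 (Ordinal hn) (finset.set0 : {set 'I_n}) (Ordinal hn)) (Rfam_le _ _ _). Qed.

Lemma encRK i D h y : decS (Rfam i D h) [ffun _ => ord0] (encS (Rfam i D h) bBig.-1 (wv i D h y)) = wv i D h y.
Proof. by rewrite encSK ?wv_in // prednK ?Rfam_le // bBig_gt0. Qed.

Lemma stv_inj_aux i m m' : fbig i m = fbig i m' -> stv i m = stv i m'.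
Proof. by move=> e; rewrite -!fbigK e. Qed.

Lemma val_lt_Amax (x : Cp) (u : 'I_(aj (tag x))) : (val u <= Amax)%N.
Proof. exact: ltnW (leq_trans (ltn_ord _) (aj_le _)). Qed.

Lemma big_valid : is_exact_DSS k d fbig phibig.
Proof.
split.
- move=> K hK m m' hKm; apply/ffunP => x.
  pose LK := LD (hnj (tag x)) (sg x) K.
  have hq : (qj (tag x) <= #|LK|)%N by have := card_LD (hnj (tag x)) (sg x) K; rewrite hK /LK; lia.
  have [hsub hcard] := ch_spec hq.
  apply: ((cvalid (c (tag x))).1 _ hcard) => u hu.
  have hK' : emb (hnj (tag x)) (sg x) u \in K.
    by have := fintype.subsetP hsub u hu; rewrite inE.
  have := stv_inj_aux (hKm _ hK') => /ffunP /(_ x); rewrite !ffunE /locx loc_emb.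
  by move/inord_inj => /(_ (val_lt_Amax _) (val_lt_Amax _)) /val_inj.
- move=> i D iD hD m m' hDm.
  suff e : stv i m = stv i m' by rewrite /fbig e.
  have hw h : h \in D -> wv i D h (stv h m) = wv i D h (stv h m').
    move=> hh; have := hDm h hh; rewrite /phibig !fbigK.
    by move/(congr1 (fun z : 'I_bBig.-1.+1 => decS (Rfam i D h) [ffun _ => ord0] z)); rewrite !encRK.
  apply/ffunP => x; rewrite !ffunE; case e : (locx x i) => [u|] //.
  congr inord; congr val.
  have hp : (pj (tag x) <= #|LD (hnj (tag x)) (sg x) D|)%N.
    by have := card_LD (hnj (tag x)) (sg x) D; rewrite hD; lia.
  have [hsub hcard] := ch_spec hp.
  have eu : emb (hnj (tag x)) (sg x) u = i by apply/locP.
  apply: ((cvalid (c (tag x))).2 u _ _ hcard) => [|v hv].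
    apply/negP => /(fintype.subsetP hsub); rewrite inE eu; exact/negP.
  set h := emb (hnj (tag x)) (sg x) v.
  have hh : h \in D by have := fintype.subsetP hsub v hv; rewrite inE.
  have hvld : vld i D h by rewrite /vld iD hh hD eqxx.
  have := hw h hh => /ffunP /(_ x); rewrite !ffunE hvld /msg e /locx loc_emb -/(SDx x D).
  rewrite /SDx hv !ffunE /locx loc_emb.
  case: pickP => [z0 _|none]; last by have := none (cf u (m x)).
  have E1 : \val (inord (\val (cf v (m x))) : 'I_Amax.+1) = \val (cf v (m x)).
    exact: (inordK (val_lt_Amax _)).
  have E2 : \val (inord (\val (cf v (m' x))) : 'I_Amax.+1) = \val (cf v (m' x)).
    exact: (inordK (val_lt_Amax _)).
  rewrite E1 E2 !valKd.
  move/inord_inj.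
  move=> /(_ (ltnW (leq_trans (ltn_ord _) (bj_le _))) (ltnW (leq_trans (ltn_ord _) (bj_le _)))).
  exact: val_inj.
Qed.

Lemma sumCp (G : forall j : 'I_L, {perm 'I_n} -> R) :
  \sum_(x : Cp) G (tag x) (sg x) = \sum_j (r j)%:R * \sum_s G j s.
Proof.
rewrite -(sig_big_dep xpredT (fun _ _ => true) (fun j (y : 'I_(r j) * {perm 'I_n}) => G j y.2)) /=.
apply: eq_bigr => j _.
rewrite -(pair_big xpredT xpredT (fun (t : 'I_(r j)) (s : {perm 'I_n}) => G j s)) /=.
by rewrite sumr_const card_ord mulr_natl.
Qed.

Lemma card_Sfam i : #|Sfam i| = (\prod_(x : Cp) bnd i x)%N.
Proof.
have := card_family (fun x : Cp => [pred y : 'I_Amax.+1 | (y < bnd i x)%N]).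
rewrite /Sfam => ->; rewrite foldrE big_map big_enum /=; apply: eq_bigr => x _.
apply: card_lt_ord; rewrite /bnd; case: (locx x i) => // _.
exact: leq_trans (aj_le _) (leqnSn _).
Qed.

Lemma card_Rfam i D h : #|Rfam i D h| = (\prod_(x : Cp) bndw i D h x)%N.
Proof.
have := card_family (fun x : Cp => [pred y : 'I_Bmax.+1 | (y < bndw i D h x)%N]).
rewrite /Rfam => ->; rewrite foldrE big_map big_enum /=; apply: eq_bigr => x _.
apply: card_lt_ord; rewrite /bndw; case: ifP => // _.
exact: leq_trans (bj_le _) (leqnSn _).
Qed.

Lemma sum_ind (P : pred {perm 'I_n}) (v : R) :
  \sum_s (if P s then v else 0) = (#|[set s | P s]|)%:R * v.
Proof. by rewrite -big_mkcond sumr_const cardsE mulr_natl. Qed.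

Lemma ln_Sfam i : ln (#|Sfam i|%:R : R) =
  \sum_j (r j)%:R * ((Nc (hnj j) i)%:R * ln ((aj j)%:R : R)).
Proof.
rewrite card_Sfam ln_prod; last by move=> x; rewrite /bnd; case: (locx x i) => // _; exact: aj_gt0.
pose G := fun (j : 'I_L) (s : {perm 'I_n}) => if ini (hnj j) s i then ln ((aj j)%:R : R) else 0.
have -> : \sum_x ln ((bnd i x)%:R : R) = \sum_x G (tag x) (sg x).
  apply: eq_bigr => x _; rewrite /G /bnd /ini -/(locx x i); case: (locx x i) => [_|] //=; exact: ln1.
rewrite sumCp; apply: eq_bigr => j _; congr (_ * _); exact: sum_ind.
Qed.

Lemma ln_Rfam_vld i D h : vld i D h -> ln (#|Rfam i D h|%:R : R) =
  \sum_j (r j)%:R * ((Kc (hnj j) (pj j) i D h)%:R * ln ((bj j)%:R : R)).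
Proof.
move=> hv; rewrite card_Rfam ln_prod; last first.
  by move=> x; rewrite /bndw; case: ifP => // _; exact: bj_gt0.
pose G := fun (j : 'I_L) (s : {perm 'I_n}) => if ini (hnj j) s i && sel (hnj j) (pj j) s D h
     then ln ((bj j)%:R : R) else 0.
have -> : \sum_x ln ((bndw i D h x)%:R : R) = \sum_x G (tag x) (sg x).
  apply: eq_bigr => x _; rewrite /G /bndw hv /= /inix /selx.
  by case: ifP => //= _; exact: ln1.
rewrite sumCp; apply: eq_bigr => j _; congr (_ * _); exact: sum_ind.
Qed.

Lemma Rfam_nvld i D h : ~~ vld i D h -> #|Rfam i D h| = 1%N.
Proof.
move=> hv; rewrite card_Rfam big1 // => x _; rewrite /bndw.
by move: hv => /negbTE ->.
Qed.

Definition i0 : 'I_n := Ordinal hn.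
Definition Pn := #|{perm 'I_n}|.
Definition Lsc : R := \sum_j (r j)%:R * ((Nc (hnj j) i0)%:R * cl (c j)).
Definition j0 : 'I_L := Ordinal hL.

Lemma Pn_gt0 : (0 < Pn)%N.
Proof. by apply/card_gt0P; exists 1%g. Qed.

Lemma Nc_val j i : ((Nc (hnj j) i)%:R : R) = (nj j)%:R * Pn%:R / n%:R.
Proof.
have := Nc_sum (hnj j) i => /(congr1 (fun z => (z%:R : R))); rewrite !natrM => <-.
by field; rewrite pnatr_eq0 -lt0n.
Qed.

Lemma Nc_gt0 j i : (0 < Nc (hnj j) i)%N.
Proof.
by rewrite -(ltr0n R) Nc_val divr_gt0 ?mulr_gt0 ?ltr0n // Pn_gt0.
Qed.

Lemma Lsc_gt0 : 0 < Lsc.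
Proof.
rewrite /Lsc (bigD1 j0) //= ltr_pwDl //.
  by rewrite !mulr_gt0 ?ltr0n ?hr ?Nc_gt0 ?cl_gt0.
by apply: sumr_ge0 => j _; rewrite !mulr_ge0 ?ler0n // ltW // cl_gt0.
Qed.

Lemma d_gt0 : (0 < d)%N.
Proof. by have := hdj j0; have := hnj j0; lia. Qed.

Lemma big_a : ln ((aBig.-1.+1)%:R : R) <= alpha * Lsc.
Proof.
rewrite prednK ?aBig_gt0 //.
have [i1 hi] := bigop.eq_bigmax (fun i => #|Sfam i|) (ltac:(by rewrite card_ord)).
rewrite /aBig hi ln_Sfam /Lsc mulr_sumr; apply: ler_sum => j _.
rewrite (Nc_const (hnj j) i1 i0) [X in _ <= X]mulrCA ler_wpM2l // [X in _ <= X]mulrCA ler_wpM2l //; exact: ca_le.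
Qed.

Lemma big_b : ln ((bBig.-1.+1)%:R : R) <= gamma / d%:R * Lsc.
Proof.
rewrite prednK ?bBig_gt0 //.
have [[[i D] h] ht] := bigop.eq_bigmax (fun t : 'I_n * {set 'I_n} * 'I_n => #|Rfam t.1.1 t.1.2 t.2|)
  (ltac:(apply/card_gt0P; exists (i0, finset.set0, i0); done)).
rewrite /bBig ht /=.
have hL0 : 0 <= Lsc := ltW Lsc_gt0.
have hd0 : 0 < (d%:R : R) by rewrite ltr0n d_gt0.
case hv : (vld i D h); last first.
  by rewrite Rfam_nvld ?hv // ln1 mulr_ge0 // divr_ge0.
rewrite ln_Rfam_vld // /Lsc mulr_sumr; apply: ler_sum => j _.
move: hv; rewrite /vld => /and3P [iD /eqP hD hh].
have hK := Kc_val (hnj j) (p := pj j) iD hh (ltac:(rewrite hD; have := hdj j; lia)).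
have hKR : ((Kc (hnj j) (pj j) i D h)%:R : R) = (pj j)%:R * (Nc (hnj j) i)%:R / d%:R.
  move/(congr1 (fun z => (z%:R : R))): hK; rewrite !natrM hD => <-.
  by field; rewrite gt_eqF.
rewrite [X in _ <= X]mulrCA ler_wpM2l // hKR (Nc_const (hnj j) i i0).
have hp0 : 0 < ((pj j)%:R : R) by rewrite ltr0n.
apply: (@le_trans _ _ ((pj j)%:R * (Nc (hnj j) i0)%:R / d%:R * (gamma / (pj j)%:R * cl (c j)))).
  by rewrite ler_wpM2l ?divr_ge0 ?mulr_ge0 //; exact: cb_le.
suff -> : (pj j)%:R * (Nc (hnj j) i0)%:R / d%:R * (gamma / (pj j)%:R * cl (c j)) =
  gamma / d%:R * ((Nc (hnj j) i0)%:R * cl (c j)) by [].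
by field; rewrite !gt_eqF.
Qed.

Lemma big_rate : ln (#|Mbig|%:R : R) / Lsc =
  n%:R * (\sum_j (r j)%:R * ln (#|cM (c j)|%:R : R)) / (\sum_j (r j)%:R * (nj j)%:R * cl (c j)).
Proof.
have e1 : ln (#|Mbig|%:R : R) = Pn%:R * \sum_j (r j)%:R * ln (#|cM (c j)|%:R : R).
  rewrite Mbig_card ln_prod; last by move=> x; exact: cM_gt0.
  pose G := fun (j : 'I_L) (s : {perm 'I_n}) => ln (#|cM (c j)|%:R : R).
  have -> : \sum_(x : Cp) ln (#|cM (c (tag x))|%:R : R) = \sum_(x : Cp) G (tag x) (sg x) by [].
  rewrite sumCp mulr_sumr; apply: eq_bigr => j _.
  by rewrite /G sumr_const -[ln _ *+ _]mulr_natl mulrCA.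
have e2 : Lsc = Pn%:R / n%:R * \sum_j (r j)%:R * (nj j)%:R * cl (c j).
  rewrite /Lsc mulr_sumr; apply: eq_bigr => j _; rewrite Nc_val; field.
  by rewrite pnatr_eq0 -lt0n.
have S0 : 0 < \sum_j (r j)%:R * (nj j)%:R * cl (c j) :> R.
  rewrite (bigD1 j0) //= ltr_pwDl //.
    by rewrite !mulr_gt0 ?ltr0n ?hr ?hpos ?cl_gt0.
  by apply: sumr_ge0 => j _; rewrite !mulr_ge0 ?ler0n // ltW // cl_gt0.
have hP : (Pn%:R : R) != 0 by rewrite pnatr_eq0 -lt0n Pn_gt0.
have hn0 : (n%:R : R) != 0 by rewrite pnatr_eq0 -lt0n.
rewrite e1 e2; field.
by rewrite hP hn0 gt_eqF.
Qed.

Lemma combine_mem : dss_file_sizes n k d alpha gamma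
   (n%:R * (\sum_j (r j)%:R * ln (#|cM (c j)|%:R : R)) /
      (\sum_j (r j)%:R * (nj j)%:R * cl (c j))).
Proof.
exists Lsc, Mbig, aBig.-1.+1, bBig.-1.+1, fbig, phibig; split.
- exact: Lsc_gt0.
- exact: Mbig_gt0.
- split; [exact: big_a | exact: big_b].
- exact: big_valid.
- by rewrite big_rate.
Qed.

End Big.

Lemma combine (R : realType) (n k d L : nat) (nj r : 'I_L -> nat) (alpha gamma : R)
  (hnj : forall j, (nj j <= n)%N) (hpos : forall j, (0 < nj j)%N)
  (hdj : forall j, (0 < nj j + d - n)%N)
  (hr : forall j, (0 < r j)%N) (hn : (0 < n)%N)
  (ha : 0 <= alpha) (hg : 0 <= gamma) (hL : (0 < L)%N)
  (c : forall j, code (nj j) (nj j + k - n) (nj j + d - n) alpha gamma) :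
  dss_file_sizes n k d alpha gamma
   (n%:R * (\sum_j (r j)%:R * ln (#|cM (c j)|%:R : R)) /
      (\sum_j (r j)%:R * (nj j)%:R * cl (c j))).
Proof. by apply: combine_mem. Qed.

Unset Implicit Arguments.

Theorem proposition6p1 (R : realType) (n k d l : nat) (ns : 'I_l -> nat)
  (hk : (0 < k)%N) (hkd : (k <= d)%N) (hdn : (d < n)%N)
  (hpos : forall j, (0 < ns j)%N)
  (hsum : n = (\sum_(j < l) ns j)%N)
  (hbig : forall j, (n - k + 1 <= ns j)%N)
  (alpha gamma : R) (ha : 0 < alpha) (hg : 0 < gamma) :
  \sum_(j < l) C_exact (ns j) (ns j + k - n)%N (ns j + d - n)%N alpha gamma
    <= C_exact n k d alpha gamma.
Proof.
have n0 : (0 < n)%N by lia.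
have hkn : (k <= n)%N by lia.
have ha0 := ltW ha; have hg0 := ltW hg.
have hnj j : (ns j <= n)%N by rewrite hsum (bigD1 j) //= leq_addr.
have hsupj j : has_sup (dss_file_sizes (ns j) (ns j + k - n) (ns j + d - n) alpha gamma).
  by apply: dss_has_sup => //; have := hnj j; lia.
have hsup : has_sup (dss_file_sizes n k d alpha gamma) by exact: dss_has_sup.
have L0 : (0 < l)%N.
  have H0 : forall (m : nat) (f : 'I_m -> nat), m = 0%N -> (\sum_(j < m) f j = 0)%N.
    by move=> m f m0; apply/eqP; rewrite sum_nat_eq0; apply/forallP => -[x hx]; exfalso; move: hx; rewrite m0.
  rewrite lt0n; apply/negP => /eqP l0; move: (H0 _ ns l0); lia.
have hdj j : (0 < ns j + d - n)%N by have := hbig j; lia.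
apply/ler_addgt0Pr => e he.
set eps := e / l%:R.
have heps : 0 < eps by rewrite divr_gt0 // ltr0n.
have hc j : exists c : code (ns j) (ns j + k - n) (ns j + d - n) alpha gamma,
    C_exact (ns j) (ns j + k - n) (ns j + d - n) alpha gamma - eps < crate c.
  have [x Ex lt] := sup_adherent heps (hsupj j).
  by have [c hxc] := mem_code Ex; exists c; rewrite -hxc.
pose cc j := proj1_sig (cid (hc j)).
have hcc j : C_exact (ns j) (ns j + k - n) (ns j + d - n) alpha gamma - eps < crate (cc j).
  exact: (proj2_sig (cid (hc j))).
have step1 : \sum_(j < l) C_exact (ns j) (ns j + k - n)%N (ns j + d - n)%N alpha gamma
    <= \sum_j crate (cc j) + e.
  have -> : e = \sum_(j < l) eps.
    by rewrite sumr_const card_ord /eps -[e / l%:R *+ l]mulr_natr divfK // pnatr_eq0 -lt0n.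
  rewrite -big_split /=; apply: ler_sum => j _; rewrite -lerBlDr; exact: ltW.
apply: (le_trans step1); rewrite lerD2r.
apply/ler_addgt0Pr => dl hdl.
have [r [hr hx]] := approx hsum n0 (fun j => cl_gt0 (cc j))
  (fun j => crate_ge0 (cc j)) hdl.
apply: (le_trans hx); rewrite lerD2r.
have := combine hnj hpos hdj hr n0 ha0 hg0 L0 cc.
have -> : \sum_j (r j)%:R * (crate (cc j) * cl (cc j)) =
          \sum_j (r j)%:R * ln (#|cM (cc j)|%:R : R).
  apply: eq_bigr => j _; rewrite /crate divfK //; rewrite gt_eqF //; exact: cl_gt0.
by move/(sup_upper_bound hsup).
Qed.
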